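(* Let $T$ be an integral domain of the form $T=K+M$, where $K$ is a subfield of $T$ and $M$ is a nonzero maximal ideal of $T$. Let $D$ be a subring of $K$ and $R=D+M$. Then: (1) If $D$ is a field, then $R$ is a completely atomic domain if and only if $T$ is a completely atomic domain. (2) If $D$ is not a field, $D$ is atomic, and $T$ is completely atomic, then $R$ is a completely atomic domain.
   Context: An atom (irreducible element) of an integral domain is a nonzero nonunit $a$ such that $a=bc$ implies $b$ or $c$ is a unit. A nonzero nonunit is atomic if it is a finite product of atoms; a domain is atomic if every nonzero nonunit is atomic. A domain is completely atomic if every nonunit divisor of an atomic element is atomic. *)

(* Defs.v *)
From HB Require Import structures.
From mathcomp Require Import all_boot all_order all_algebra.
Set Implicit Arguments. Unset Strict Implicit. Unset Printing Implicit Defensive.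
Import GRing.Theory.
Local Open Scope ring_scope.

(* Subsets of an integral domain T are represented as Prop predicates T -> Prop.
   A subring S of T is itself an integral domain; all divisibility notions
   (units, atoms, atomicity) are taken INSIDE S. *)

Section Defs.
Variable T : idomainType.
Implicit Types (S : T -> Prop).

Definition is_subring S : Prop :=
  [/\ S 1, (forall x y, S x -> S y -> S (x - y)) & (forall x y, S x -> S y -> S (x * y))].

Definition is_field S : Prop :=
  forall x, S x -> x != 0 -> exists2 y, S y & x * y = 1.

Definition is_subfield S : Prop := is_subring S /\ is_field S.

Definition is_ideal (I : T -> Prop) : Prop :=
  [/\ I 0, (forall x y, I x -> I y -> I (x + y)) & (forall r x, I x -> I (r * x))].

Definition is_maximal_ideal (M : T -> Prop) : Prop :=
  [/\ is_ideal M, ~ M 1 &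
      forall I, is_ideal I -> (forall x, M x -> I x) -> I 1 \/ (forall x, I x -> M x)].

Definition set_add (A B : T -> Prop) : T -> Prop :=
  fun x => exists a b, [/\ A a, B b & x = a + b].

Definition unit_in S (x : T) : Prop := S x /\ exists2 y, S y & x * y = 1.

Definition atom_in S (a : T) : Prop :=
  [/\ S a, a != 0, ~ unit_in S a &
      forall b c, S b -> S c -> a = b * c -> unit_in S b \/ unit_in S c].

Definition atomic_elt_in S (x : T) : Prop :=
  [/\ S x, x != 0, ~ unit_in S x &
      exists s : seq T, [/\ s != [::], (forall a, a \in s -> atom_in S a)
                                     & x = \prod_(a <- s) a]].

Definition atomic_domain S : Prop :=
  forall x, S x -> x != 0 -> ~ unit_in S x -> atomic_elt_in S x.

Definition completely_atomic S : Prop :=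
  forall x y, atomic_elt_in S x -> S y -> ~ unit_in S y ->
    (exists2 z, S z & x = y * z) -> atomic_elt_in S y.

End Defs.

(* Main.v *)
Require Import Defs.
From Stdlib Require Import ClassicalEpsilon Classical FunctionalExtensionality PropExtensionality.
From HB Require Import structures.
From mathcomp Require Import all_boot all_order all_algebra.
From mathcomp Require Import ring.
Import GRing.Theory.
Local Open Scope ring_scope.

Set Implicit Arguments.
Unset Strict Implicit.

Lemma prod_ind (T : idomainType) (P : T -> Prop) : P 1 -> (forall x y, P x -> P y -> P (x * y)) ->
  forall s : seq T, (forall a, a \in s -> P a) -> P (\prod_(a <- s) a).
Proof.
move=> P1 PM; elim=> [|a s IH] Hs; first by rewrite big_nil.
rewrite big_cons; apply: PM; first by apply: Hs; rewrite inE eqxx.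
by apply: IH => b Hb; apply: Hs; rewrite inE Hb orbT.
Qed.

Lemma mul_eq1_neq0 (T : idomainType) (a b : T) : a * b = 1 -> a != 0.
Proof.
by move=> H; apply/eqP=> a0; move: H; rewrite a0 mul0r => /eqP; rewrite eq_sym oner_eq0.
Qed.

Section Gen.
Variable T : idomainType.
Variable S : T -> Prop.
Hypothesis S1 : S 1.
Hypothesis Smul : forall x y, S x -> S y -> S (x * y).

Lemma unit_mulS u v : unit_in S u -> unit_in S v -> unit_in S (u * v).
Proof using S1 Smul.
move=> [Su [u' Su' Hu]] [Sv [v' Sv' Hv]]; split; first exact: Smul.
exists (u' * v'); first exact: Smul.
by rewrite mulrACA Hu Hv mulr1.
Qed.

Lemma unit_divS a b : S a -> S b -> unit_in S (a * b) -> unit_in S a.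
Proof using S1 Smul.
move=> Sa Sb [_ [w Sw Hw]]; split=> //; exists (b * w); first exact: Smul.
by rewrite mulrA.
Qed.

Lemma unit_neq0 u : unit_in S u -> u != 0.
Proof using S1 Smul.
by move=> [_ [w _ Hw]]; apply: mul_eq1_neq0 Hw.
Qed.

Lemma unit_inv u : unit_in S u -> exists2 v, unit_in S v & v * u = 1.
Proof using S1 Smul.
move=> [Su [v Sv H]]; exists v; last by rewrite mulrC.
split=> //; exists u => //; by rewrite mulrC.
Qed.

Lemma atom_unit_mul u a : unit_in S u -> atom_in S a -> atom_in S (u * a).
Proof using S1 Smul.
move=> Hu [Sa a0 na Ha]; have [v Hv vu] := unit_inv Hu.
split.
- exact: Smul (proj1 Hu) Sa.
- by rewrite mulf_neq0 // unit_neq0.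
- move=> H; apply: na; have: unit_in S (v * (u * a)) by apply: unit_mulS.
  by rewrite mulrA vu mul1r.
- move=> b c Sb Sc E.
  have : a = (v * b) * c by rewrite -mulrA -E mulrA vu mul1r.
  move=> /(Ha _ _ (Smul (proj1 Hv) Sb) Sc) [H|H]; [left|by right].
  have : unit_in S (u * (v * b)) by apply: unit_mulS.
  by rewrite mulrA (mulrC u) vu mul1r.
Qed.

Definition ua (x : T) := exists u (s : seq T),
  [/\ unit_in S u, (forall a, a \in s -> atom_in S a) & x = u * \prod_(a <- s) a].

Lemma unit1 : unit_in S 1.
Proof using S1 Smul. by split=> //; exists 1 => //; rewrite mulr1. Qed.

Lemma ua_unit u : unit_in S u -> ua u.
Proof using S1 Smul. by move=> Hu; exists u, [::]; split=> //; rewrite big_nil mulr1. Qed.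

Lemma ua_mul x y : ua x -> ua y -> ua (x * y).
Proof using S1 Smul.
move=> [u [s [Hu Hs ->]]] [v [t [Hv Ht ->]]].
exists (u * v), (s ++ t); split; first exact: unit_mulS.
  by move=> a; rewrite mem_cat => /orP [/Hs|/Ht].
by rewrite big_cat /= mulrACA.
Qed.

Lemma ua_prod s : (forall a, a \in s -> ua a) -> ua (\prod_(a <- s) a).
Proof using S1 Smul.
apply: (prod_ind (P := ua)); [exact: (ua_unit unit1) | exact: ua_mul].
Qed.

Lemma ua_atom a : atom_in S a -> ua a.
Proof using S1 Smul.
move=> Ha; exists 1, [:: a]; split.
- exact: unit1.
- by move=> b; rewrite inE => /eqP ->.
- by rewrite big_seq1 mul1r.
Qed.

Lemma atomic_ua x : atomic_elt_in S x -> ua x.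
Proof using S1 Smul.
move=> [_ _ _ [s [_ Hs ->]]]; exists 1, s; split=> //; [exact: unit1 | by rewrite mul1r].
Qed.

Lemma ua_atomic x : ua x -> ~ unit_in S x -> atomic_elt_in S x.
Proof using S1 Smul.
move=> [u [[|a s] [Hu Hs Ex]]] nx.
  by exfalso; apply: nx; rewrite Ex big_nil mulr1.
have Hs' : forall b, b \in s -> atom_in S b.
  by move=> b Hb; apply: Hs; rewrite inE Hb orbT.
have Sp : S (\prod_(b <- s) b).
  apply: (prod_ind (P := S)) => // b Hb; by case: (Hs' b Hb).
have np : \prod_(b <- s) b != 0.
  apply: (prod_ind (P := fun x => x != 0)) => [|x' y' ? ?|b Hb].
  - exact: oner_neq0.
  - exact: mulf_neq0.
  - by case: (Hs' b Hb).
have Hua : atom_in S (u * a) by apply: atom_unit_mul => //; apply: Hs; rewrite inE eqxx.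
have Ex' : x = (u * a) * \prod_(b <- s) b by rewrite Ex big_cons mulrA.
split.
- rewrite Ex'; apply: Smul => //; by case: Hua.
- rewrite Ex' mulf_neq0 //; by case: Hua.
- exact: nx.
- exists ((u * a) :: s); split => //.
  + move=> b; rewrite inE => /orP [/eqP ->|Hb] //; exact: Hs'.
  + by rewrite big_cons.
Qed.

Lemma atomic_unit_mul u x : unit_in S u -> atomic_elt_in S x -> atomic_elt_in S (u * x).
Proof using S1 Smul.
move=> Hu Hx; apply: ua_atomic; first exact: ua_mul (ua_unit Hu) (atomic_ua Hx).
move=> H; case: Hx => Sx _ nx _; apply: nx; apply: (@unit_divS x u) => //.
  exact: (proj1 Hu).
by rewrite mulrC.
Qed.

End Gen.

Section Main.
Variable T : idomainType.
Variables K M D : T -> Prop.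
Hypothesis HK : is_subfield K.
Hypothesis HM : is_maximal_ideal M.
Hypothesis HKM : forall t : T, set_add K M t.
Hypothesis HD : is_subring D.
Hypothesis HDK : forall x, D x -> K x.

Local Notation TT := (fun _ : T => True).

Lemma K1 : K 1. Proof. by move: HK => [[? ? ?] ?]. Qed.
Lemma Ksub x y : K x -> K y -> K (x - y). Proof. by move: HK => [[? ? ?] ?]; auto. Qed.
Lemma Kmul x y : K x -> K y -> K (x * y). Proof. by move: HK => [[? ? ?] ?]; auto. Qed.
Lemma Kfield : is_field K. Proof. by case: HK. Qed.
Lemma K0 : K 0. Proof. by rewrite -(subrr 1); apply: Ksub; apply: K1. Qed.

Lemma D1 : D 1. Proof. by move: HD => [? ? ?]. Qed.
Lemma Dsub x y : D x -> D y -> D (x - y). Proof. by move: HD => [? ? ?]; auto. Qed.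
Lemma Dmul x y : D x -> D y -> D (x * y). Proof. by move: HD => [? ? ?]; auto. Qed.
Lemma D0 : D 0. Proof. by rewrite -(subrr 1); apply: Dsub; apply: D1. Qed.

Lemma M0 : M 0. Proof. by move: HM => [[? ? ?] ? ?]. Qed.
Lemma Madd x y : M x -> M y -> M (x + y). Proof. by move: HM => [[? ? ?] ? ?]; auto. Qed.
Lemma Mmul r x : M x -> M (r * x). Proof. by move: HM => [[? ? ?] ? ?]; auto. Qed.
Lemma Mn1 : ~ M 1. Proof. by move: HM => [? ? ?]. Qed.
Lemma Mmulr x r : M x -> M (x * r). Proof. by move=> Mx; rewrite mulrC; apply: Mmul. Qed.
Lemma Msub x y : M x -> M y -> M (x - y).
Proof. by move=> Mx My; apply: Madd => //; rewrite -mulN1r; apply: Mmul. Qed.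

Lemma KM0 k : K k -> M k -> k = 0.
Proof.
move=> Kk Mk; case: (eqVneq k 0) => // k0.
have [y Ky ky] := Kfield Kk k0.
by exfalso; apply: Mn1; rewrite -ky; apply: Mmulr.
Qed.

Lemma ex_phi t : exists k, K k /\ M (t - k).
Proof. have [a [b [Ka Mb ->]]] := HKM t. exists a; split => //. by have -> : a + b - a = b by ring. Qed.

Definition phi t : T := proj1_sig (constructive_indefinite_description _ (ex_phi t)).
Lemma phiK t : K (phi t).
Proof. by rewrite /phi; case: constructive_indefinite_description => k []. Qed.
Lemma phiM t : M (t - phi t).
Proof. by rewrite /phi; case: constructive_indefinite_description => k []. Qed.

Lemma phi_uniq t k : K k -> M (t - k) -> phi t = k.
Proof.
move=> Kk Mk; apply/eqP; rewrite -subr_eq0; apply/eqP; apply: KM0.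
  by apply: Ksub => //; apply: phiK.
have -> : phi t - k = (t - k) - (t - phi t) by ring.
by apply: Msub => //; apply: phiM.
Qed.

Lemma phi_K k : K k -> phi k = k.
Proof. by move=> Kk; apply: phi_uniq => //; rewrite subrr; apply: M0. Qed.
Lemma phi1 : phi 1 = 1. Proof. exact: phi_K K1. Qed.
Lemma phi_mul s t : phi (s * t) = phi s * phi t.
Proof.
apply: phi_uniq; first by apply: Kmul; apply: phiK.
have -> : s * t - phi s * phi t = (s - phi s) * t + phi s * (t - phi t) by ring.
by apply: Madd; [apply: Mmulr | apply: Mmul]; apply: phiM.
Qed.
Lemma phi_M t : M t -> phi t = 0.
Proof. by move=> Mt; apply: phi_uniq; [exact: K0 | rewrite subr0]. Qed.
Lemma phi_M0 t : phi t = 0 -> M t.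
Proof. by move=> p0; have := phiM t; rewrite p0 subr0. Qed.

Lemma phi_prod (s : seq T) : phi (\prod_(a <- s) a) = \prod_(a <- s) phi a.
Proof. elim: s => [|a s IH]; first by rewrite !big_nil phi1. by rewrite !big_cons phi_mul IH. Qed.

Lemma Kinv k : K k -> k != 0 -> k \is a GRing.unit /\ K k^-1.
Proof.
move=> Kk k0; have [y Ky ky] := Kfield Kk k0.
have ku : k \is a GRing.unit by apply/unitrP; exists y; split; rewrite // mulrC.
split=> //; suff -> : k^-1 = y by [].
by rewrite -[k^-1]mulr1 -ky mulKr.
Qed.
Lemma KU k : K k -> k != 0 -> k \is a GRing.unit. Proof. by move=> a b; case: (Kinv a b). Qed.
Lemma KI k : K k -> k != 0 -> K k^-1. Proof. by move=> a b; case: (Kinv a b). Qed.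

Lemma phiKmul k x : K k -> phi (k * x) = k * phi x.
Proof. by move=> Kk; rewrite phi_mul phi_K. Qed.

Lemma phi_unit x : x \is a GRing.unit -> phi x != 0.
Proof. by move=> xu; apply: (@mul_eq1_neq0 _ _ (phi x^-1)); rewrite -phi_mul mulrV // phi1. Qed.

Lemma decomp1 x : phi x != 0 -> exists2 x1, phi x1 = 1 & x = phi x * x1.
Proof.
move=> px; have [pu pK] := Kinv (phiK x) px.
exists ((phi x)^-1 * x); first by rewrite phiKmul // mulVr.
by rewrite mulrA mulrV // mul1r.
Qed.

Lemma unitT x : unit_in TT x <-> x \is a GRing.unit.
Proof.
split; first by move=> [_ [y _ xy]]; apply/unitrP; exists y; split; rewrite // mulrC.
by move=> xu; split=> //; exists x^-1 => //; exact: mulrV.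
Qed.

Definition RR x := D (phi x).

Lemma R1 : RR 1. Proof. by rewrite /RR phi1; apply: D1. Qed.
Lemma Rmul x y : RR x -> RR y -> RR (x * y). Proof. by rewrite /RR phi_mul; apply: Dmul. Qed.

Lemma R_eq : set_add D M = RR.
Proof.
apply: functional_extensionality => x; apply: propositional_extensionality; split.
- move=> [d [m [Dd Mm ->]]]; rewrite /RR (@phi_uniq _ d) //; first exact: HDK.
  by have -> : d + m - d = m by ring.
- move=> Dx; exists (phi x), (x - phi x); split=> //; [exact: phiM | ring].
Qed.

Lemma unitR x : unit_in RR x <-> [/\ RR x, x \is a GRing.unit & exists2 e, D e & phi x * e = 1].
Proof.
split.
- move=> [Rx [y Ry xy]]; split=> //; first by apply/unitT; split=> //; exists y.
  by exists (phi y) => //; rewrite -phi_mul xy phi1.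
- move=> [Rx xu [e De xe]]; split=> //; exists x^-1; last exact: mulrV.
  have px : phi x != 0 by apply: mul_eq1_neq0 xe.
  have : phi x * phi x^-1 = phi x * e by rewrite -phi_mul mulrV // phi1.
  by move/(mulfI px); rewrite /RR => ->.
Qed.

Lemma unitR1 x : phi x = 1 -> (unit_in RR x <-> x \is a GRing.unit).
Proof.
move=> p1; split; first by case/unitR.
move=> xu; apply/unitR; split=> //; first by rewrite /RR p1; apply: D1.
by exists 1; [apply: D1 | rewrite p1 mulr1].
Qed.

Lemma split_R b c : RR (b * c) -> exists k, [/\ K k, k != 0, RR (k * b) & RR (k^-1 * c)].
Proof.
move=> Rbc; case: (eqVneq (phi c) 0) => c0.
- case: (eqVneq (phi b) 0) => b0.
  + exists 1; split; [exact: K1 | exact: oner_neq0 | |];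
      by rewrite ?invr1 mul1r /RR ?b0 ?c0; apply: D0.
  + have [bu bK] := Kinv (phiK b) b0.
    exists (phi b)^-1; split => //; first by rewrite invr_neq0.
    * by rewrite /RR phiKmul // mulVr //; apply: D1.
    * rewrite invrK /RR phiKmul; last exact: phiK.
      by rewrite c0 mulr0; apply: D0.
- have [cu cK] := Kinv (phiK c) c0.
  exists (phi c); split => //; first exact: phiK.
  + rewrite /RR phiKmul; last exact: phiK.
    by rewrite mulrC -phi_mul.
  + by rewrite /RR phiKmul // mulVr //; apply: D1.
Qed.

Section NotField.
Hypothesis nf : ~ is_field D.

Lemma nf_wit : exists d, [/\ D d, d != 0 & forall y, D y -> d * y != 1].
Proof.
apply: NNPP => H; apply: nf => x Dx x0; apply: NNPP => H2; apply: H.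
exists x; split=> // y Dy; apply/eqP => xy; apply: H2; by exists y.
Qed.

Lemma atomR_phi a : atom_in RR a -> phi a != 0.
Proof.
move=> [Ra a0 na Hs]; apply/eqP => pa0.
have [d [Dd d0 nd]] := nf_wit.
have Kd := HDK Dd; have [du Kdi] := Kinv Kd d0.
have E : a = d * (d^-1 * a) by rewrite mulrA mulrV // mul1r.
have Rd : RR d by rewrite /RR phi_K.
have Rda : RR (d^-1 * a) by rewrite /RR phiKmul // pa0 mulr0; apply: D0.
case: (Hs _ _ Rd Rda E) => H.
- case/unitR: H => _ _ [e De]; rewrite phi_K // => de.
  by move: (nd e De); rewrite de eqxx.
- case: H => _ [y _ Hy]; apply: Mn1; rewrite -Hy; apply: Mmulr.
  by apply: phi_M0; rewrite phiKmul // pa0 mulr0.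
Qed.

Lemma atomR_uaT a : atom_in RR a -> ua TT a.
Proof.
move=> Ha; have pa := atomR_phi Ha; case: Ha => [Ra a0 na Hs].
have [a1 pa1 E] := decomp1 pa.
have Kd := phiK a; have [du Kdi] := Kinv Kd pa.
have Rd : RR (phi a) by rewrite /RR phi_K.
have Ra1 : RR a1 by rewrite /RR pa1; apply: D1.
case: (Hs _ _ Rd Ra1 E) => H; last first.
  apply: ua_unit => //; apply/unitT; rewrite E unitrM du /=.
  by case/unitR: H.
have na1 : ~ a1 \is a GRing.unit.
  move=> a1u; apply: na; rewrite E; apply: unit_mulS => //; [exact: R1 | exact: Rmul |].
  by apply/unitR1.
rewrite E; apply: ua_mul => //; first by apply: ua_unit => //; apply/unitT.
apply: ua_atom => //; split => //.
- by apply: contra_neq a0 => a10; rewrite E a10 mulr0.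
- by move/unitT.
- move=> b c _ _ Eb.
  have pbc : phi b * phi c = 1 by rewrite -phi_mul -Eb.
  have pb := mul_eq1_neq0 pbc.
  have pc : phi c != 0 by apply: (@mul_eq1_neq0 _ _ (phi b)); rewrite mulrC.
  have [b1 pb1 hb] := decomp1 pb; have [c1 pc1 hc] := decomp1 pc.
  have bu := KU (phiK b) pb; have cu := KU (phiK c) pc.
  have E2 : a = (phi a * b1) * c1.
    have E3 : a1 = b1 * c1.
      rewrite Eb hb hc -[X in _ = X]mulr1 -pbc; ring.
    by rewrite {1}E E3 mulrA.
  have Rdb1 : RR (phi a * b1) by rewrite /RR phi_mul pb1 mulr1 phi_K.
  have Rc1 : RR c1 by rewrite /RR pc1; apply: D1.
  case: (Hs _ _ Rdb1 Rc1 E2) => /unitR [_ Hu _]; [left|right]; apply/unitT.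
  + by rewrite hb unitrM bu /=; move: Hu; rewrite unitrM => /andP [].
  + by rewrite hc unitrM cu.
Qed.

Lemma atomicR_uaT x : atomic_elt_in RR x -> ua TT x.
Proof.
case=> _ _ _ [s [_ Hs ->]]; apply: ua_prod => // a /Hs; exact: atomR_uaT.
Qed.

Lemma atomicR_phi x : atomic_elt_in RR x -> phi x != 0.
Proof.
case=> _ _ _ [s [_ Hs ->]].
apply: (prod_ind (P := fun y => phi y != 0)) => [|y z py pz|a /Hs].
- by rewrite phi1 oner_neq0.
- by rewrite phi_mul mulf_neq0.
- exact: atomR_phi.
Qed.

Lemma atomD_R d : atom_in D d -> atom_in RR d.
Proof.
move=> [Dd d0 nd Hs]; have Kd := HDK Dd.
split => //.
- by rewrite /RR phi_K.
- case/unitR => _ _ [e De de]; rewrite phi_K in de => //; apply: nd; split=> //; by exists e.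
- move=> b c Rb Rc E.
  have E2 : d = phi b * phi c by rewrite -phi_mul -E phi_K.
  have du := KU Kd d0; rewrite E unitrM in du; case/andP: du => bu cu.
  case: (Hs _ _ Rb Rc E2) => [[_ [e De be]]|[_ [e De ce]]]; [left|right]; apply/unitR; split => //.
  + by exists e.
  + by exists e.
Qed.

Lemma atomT1_R a : atom_in TT a -> phi a = 1 -> atom_in RR a.
Proof.
move=> [_ a0 na Hs] pa; split => //.
- by rewrite /RR pa; apply: D1.
- by case/unitR => _ /unitT.
- move=> b c Rb Rc E.
  have pbc : phi b * phi c = 1 by rewrite -phi_mul -E.
  case: (Hs b c I I E) => /unitT H; [left|right]; apply/unitR; split => //.
  + by exists (phi c).
  + by exists (phi b); rewrite // mulrC.
Qed.

Lemma ua_norm (s : seq T) : (forall a, a \in s -> atom_in TT a) ->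
  phi (\prod_(a <- s) a) != 0 ->
  ua RR ((phi (\prod_(a <- s) a))^-1 * \prod_(a <- s) a).
Proof.
elim: s => [|a s IH] Hs.
  move=> _; rewrite big_nil phi1 invr1 mul1r; apply: ua_unit; [exact: R1 | exact: Rmul | ].
  exact: unit1 R1 Rmul.
rewrite big_cons phi_mul mulf_eq0 negb_or => /andP [pa ps].
have au := KU (phiK a) pa; have su := KU (phiK _) ps.
rewrite invrM //.
have -> : (phi (\prod_(a0 <- s) a0))^-1 / phi a * (a * \prod_(a0 <- s) a0) =
   ((phi a)^-1 * a) * ((phi (\prod_(a0 <- s) a0))^-1 * \prod_(a0 <- s) a0) by ring.
apply: ua_mul; [exact: R1 | exact: Rmul | |].
- apply: ua_atom; [exact: R1 | exact: Rmul |].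
  apply: atomT1_R; last by rewrite phiKmul ?mulVr //; exact: KI (phiK a) pa.
  apply: atom_unit_mul => //; first by apply/unitT; rewrite unitrV.
  by apply: Hs; rewrite inE eqxx.
- by apply: IH => // b Hb; apply: Hs; rewrite inE Hb orbT.
Qed.

Lemma main2 : atomic_domain D -> completely_atomic TT -> completely_atomic RR.
Proof.
move=> aD caT x y Ax Ry ny [z Rz E].
have px := atomicR_phi Ax.
have py : phi y != 0.
  by move: px; rewrite E phi_mul mulf_eq0 negb_or => /andP [].
have [y1 py1 hy] := decomp1 py.
have Ky := phiK y.
have uae : ua RR (phi y).
  case: (classic (unit_in D (phi y))) => He.
  - apply: ua_unit; [exact: R1 | exact: Rmul |].
    apply/unitR; split; [by rewrite /RR phi_K | exact: KU | ].
    by case: He => _ [e De ye]; exists e; rewrite // phi_K.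
  - case: (aD _ Ry py He) => _ _ _ [s [_ Hs ->]].
    apply: ua_prod; [exact: R1 | exact: Rmul |] => a /Hs Ha.
    apply: ua_atom; [exact: R1 | exact: Rmul |]; exact: atomD_R.
have uay1 : ua RR y1.
  case: (boolP (y1 \is a GRing.unit)) => y1u.
  - apply: ua_unit; [exact: R1 | exact: Rmul |]; exact/unitR1.
  - have uaT := atomicR_uaT Ax.
    have xu : ~ x \is a GRing.unit.
      rewrite E hy !unitrM => /andP [/andP [_ H] _]; by rewrite H in y1u.
    have AxT : atomic_elt_in TT x by apply: ua_atomic => // /unitT.
    have Ay1 : atomic_elt_in TT y1.
      apply: (caT x y1 AxT I); first by move/unitT=> H; rewrite H in y1u.
      by exists (phi y * z) => //; rewrite E {1}hy; ring.
    case: Ay1 => _ _ _ [s [_ Hs Es]].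
    have := ua_norm Hs; rewrite -Es py1 invr1 mul1r; apply.
    by rewrite oner_neq0.
apply: ua_atomic; [exact: R1 | exact: Rmul | | exact: ny].
rewrite hy; apply: ua_mul => //; [exact: R1 | exact: Rmul].
Qed.

End NotField.

Section IsField.
Hypothesis Df : is_field D.

Lemma unitRf x : RR x -> (unit_in RR x <-> x \is a GRing.unit).
Proof.
move=> Rx; split; first by case/unitR.
move=> xu; apply/unitR; split => //.
have [e De xe] := Df Rx (phi_unit xu); by exists e.
Qed.

Lemma F2 a : atom_in RR a -> atom_in TT a.
Proof.
move=> [Ra a0 na Hs]; split => //.
- by move/unitT => H; apply: na; apply/unitRf.
- move=> b c _ _ E.
  have Rbc : RR (b * c) by rewrite -E.
  have [k [Kk k0 Rkb Rkc]] := split_R Rbc.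
  have ku := KU Kk k0.
  have E' : a = (k * b) * (k^-1 * c) by rewrite mulrACA mulrV // mul1r.
  case: (Hs _ _ Rkb Rkc E') => /unitR [_ H _]; [left|right]; apply/unitT;
    by move: H; rewrite unitrM => /andP [].
Qed.

Lemma F3 a : atom_in TT a -> RR a -> atom_in RR a.
Proof.
move=> [_ a0 na Hs] Ra; split => //.
- by move/unitRf => /(_ Ra) /unitT.
- move=> b c Rb Rc E; case: (Hs b c I I E) => /unitT H; [left|right]; exact/unitRf.
Qed.

Lemma F4a x : atomic_elt_in RR x -> atomic_elt_in TT x.
Proof.
move=> [Rx x0 nx [s [sn Hs E]]]; split => //.
- by move/unitT => H; apply: nx; apply/unitRf.
- by exists s; split => // a /Hs; exact: F2.
Qed.

Lemma lemmaA (s : seq T) : s != [::] -> (forall a, a \in s -> atom_in TT a) ->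
  forall k, K k -> k != 0 -> RR (k * \prod_(a <- s) a) ->
  exists s', [/\ s' != [::], (forall a, a \in s' -> atom_in RR a) &
                 k * \prod_(a <- s) a = \prod_(a <- s') a].
Proof.
elim: s => [//|a s IH] _ Hs k Kk k0.
rewrite big_cons mulrA => Rx.
have ku := KU Kk k0.
have Ha : atom_in TT a by apply: Hs; rewrite inE eqxx.
case: s IH Hs Rx => [|b s] IH Hs Rx.
- exists [:: k * a]; split => //.
  + move=> c; rewrite inE => /eqP ->; apply: F3; last by rewrite big_nil mulr1 in Rx.
    by apply: atom_unit_mul => //; apply/unitT.
  + by rewrite big_nil mulr1 big_seq1.
- have [j [Kj j0 Rj Rj']] := split_R Rx.
  have ju := KU Kj j0.
  have [s'' [sn'' Hs'' E'']] := IH isT (fun c Hc => Hs c (@mem_behead _ (a :: b :: s) c Hc)) _ (KI Kj j0) (invr_neq0 j0) Rj'.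
  exists (j * (k * a) :: s''); split => //.
  + move=> c; rewrite inE => /orP [/eqP ->|/Hs''] //.
    apply: F3 => //; rewrite mulrA; apply: atom_unit_mul => //; apply/unitT.
    by rewrite unitrM ju ku.
  + by rewrite [X in _ = X]big_cons -E'' mulrACA mulrV // mul1r.
Qed.

Lemma F4b x : RR x -> atomic_elt_in TT x -> atomic_elt_in RR x.
Proof.
move=> Rx [_ x0 nx [s [sn Hs E]]].
have R1x : RR (1 * \prod_(a <- s) a) by rewrite mul1r -E.
have [s' [sn' Hs' E']] := lemmaA sn Hs K1 (oner_neq0 _) R1x.
split => //.
- by move/unitRf => /(_ Rx) /unitT.
- by exists s'; split => //; rewrite E -E' mul1r.
Qed.

Lemma main1a : completely_atomic TT -> completely_atomic RR.
Proof.
move=> caT x y Ax Ry ny [z Rz E].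
apply: F4b => //; apply: (caT x y (F4a Ax) I _ (ex_intro2 _ _ z I E)).
by move/unitT => yu; apply: ny; apply/unitRf.
Qed.

Lemma main1b : completely_atomic RR -> completely_atomic TT.
Proof.
move=> caR x y Ax _ ny [z _ E].
have [k [Kk k0 Rkx]] : exists k, [/\ K k, k != 0 & RR (k * x)].
  case: (eqVneq (phi x) 0) => px.
  - by exists 1; split; [exact: K1 | exact: oner_neq0 | rewrite mul1r /RR px; exact: D0].
  - exists (phi x)^-1; split; [exact: KI (phiK x) px | by rewrite invr_neq0 |].
    have pu := KU (phiK x) px.
    rewrite /RR phiKmul; last exact: KI (phiK x) px.
    by rewrite mulVr //; exact: D1.
have ku := KU Kk k0.
have Ax' : atomic_elt_in TT (k * x) by apply: atomic_unit_mul => //; apply/unitT.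
have Rx' := Rkx.
rewrite E mulrA in Rkx.
have [j [Kj j0 Ry' Rz']] := split_R Rkx.
have ju := KU Kj j0.
have ny' : ~ unit_in RR (j * (k * y)).
  case/unitR => _ H _; apply: ny; apply/unitT.
  by move: H; rewrite !unitrM => /andP [_ /andP [_]].
have Exy : k * x = j * (k * y) * (j^-1 * z) by rewrite mulrACA mulrV // mul1r E mulrA.
have Ay' := caR (k * x) _ (F4b Rx' Ax') Ry' ny'
   (ex_intro2 _ _ (j^-1 * z) Rz' Exy).
have := F4a Ay'.
have -> : j * (k * y) = (j * k) * y by rewrite mulrA.
have jku : j * k \is a GRing.unit by rewrite unitrM ju ku.
have Hu : unit_in TT ((j * k)^-1) by apply/unitT; rewrite unitrV.
move=> Ajk; have := atomic_unit_mul (S := TT) I (fun _ _ _ _ => I) Hu Ajk.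
by rewrite mulrA mulVr // mul1r.
Qed.

End IsField.
End Main.

Theorem theorem3p1 (T : idomainType) (K M D : T -> Prop) :
  is_subfield K ->
  is_maximal_ideal M ->
  (exists m, M m /\ m != 0) ->
  (forall t : T, set_add K M t) ->
  is_subring D -> (forall x, D x -> K x) ->
  (is_field D ->
     (completely_atomic (set_add D M) <-> completely_atomic (fun _ : T => True)))
  /\
  (~ is_field D -> atomic_domain D -> completely_atomic (fun _ : T => True) ->
     completely_atomic (set_add D M)).
Proof.
move=> HK HM _ HKM HD HDK.
rewrite (R_eq HK HM HKM HDK).
split.
- move=> Df; split; [exact: (main1b HK HM HD Df) | exact: main1a].
- move=> nf; exact: (main2 HK HM HD HDK nf).
Qed.
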